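(* Let $G$ and $G'$ be finitely generated groups, and suppose that one of the following holds: (i) $G$ is a subgroup of $G'$; (ii) $G$ is a quotient of $G'$ (there is a surjective homomorphism $G'\to G$); (iii) $G'$ is the quotient of $G$ by a finite normal subgroup (there is a surjective homomorphism $G\to G'$ with finite kernel). If $G$ has exponential Nielsen growth, then $G'$ has exponential Nielsen growth.
   Context: For a group $G$, a generating $n$-tuple is $(g_1,\dots,g_n)\in G^n$ with $G=\langle g_1,\dots,g_n\rangle$. The product replacement graph $\Gamma_n(G)$ has vertices the generating $n$-tuples, with edges from $(g_1,\dots,g_n)$ to each tuple obtained by replacing $g_j$ by $g_jg_i^{\pm1}$ or $g_i^{\pm1}g_j$, for every ordered pair $i\neq j$. For $S\in\Gamma_n(G)$, $\Gamma_n(G,S)$ is the connected component of $\Gamma_n(G)$ containing $S$. A connected graph has exponential growth if for some vertex $v$ there is $\alpha>1$ such that the number of vertices at distance at most $r$ from $v$ is at least $\alpha^r$ for all sufficiently large $r$. $G$ has exponential Nielsen growth if $\Gamma_n(G,S)$ has exponential growth for some $n$ and some generating $n$-tuple $S$. *)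

(* Defs.v *)
From Stdlib Require Import Reals List Arith.
Import ListNotations.
Open Scope R_scope.

Record Group := {
  carrier :> Type;
  gmul : carrier -> carrier -> carrier;
  gone : carrier;
  ginv : carrier -> carrier;
  gmul_assoc : forall x y z, gmul x (gmul y z) = gmul (gmul x y) z;
  gmul_1l : forall x, gmul gone x = x;
  gmul_Vl : forall x, gmul (ginv x) x = gone
}.

Arguments gmul {g}.
Arguments gone {g}.
Arguments ginv {g}.

Definition is_hom (G H : Group) (f : G -> H) : Prop :=
  forall x y, f (gmul x y) = gmul (f x) (f y).

Inductive in_gen {G : Group} (l : list G) : G -> Prop :=
| gen_base : forall x, In x l -> in_gen l x
| gen_one : in_gen l gone
| gen_mul : forall x y, in_gen l x -> in_gen l y -> in_gen l (gmul x y)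
| gen_inv : forall x, in_gen l x -> in_gen l (ginv x).

Definition generates {G : Group} (l : list G) : Prop := forall g, in_gen l g.

Definition finitely_generated (G : Group) : Prop :=
  exists l : list G, generates l.

Definition gen_tuple (G : Group) (n : nat) (S : list G) : Prop :=
  length S = n /\ generates S.

Fixpoint set_nth {A : Type} (l : list A) (j : nat) (a : A) : list A :=
  match l, j with
  | [], _ => []
  | _ :: t, O => a :: t
  | h :: t, S j' => h :: set_nth t j' a
  end.

Definition nielsen_move {G : Group} (n : nat) (S T : list G) : Prop :=
  exists i j, (i < n)%nat /\ (j < n)%nat /\ i <> j /\
    let gi := nth i S gone in
    let gj := nth j S gone in
    (T = set_nth S j (gmul gj gi) \/ T = set_nth S j (gmul gj (ginv gi)) \/
     T = set_nth S j (gmul gi gj) \/ T = set_nth S j (gmul (ginv gi) gj)).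

Definition pr_edge (G : Group) (n : nat) (S T : list G) : Prop :=
  gen_tuple G n S /\ gen_tuple G n T /\ nielsen_move n S T.

Inductive reach_le (G : Group) (n : nat) : nat -> list G -> list G -> Prop :=
| reach_refl : forall r S, reach_le G n r S S
| reach_step : forall r S U T, pr_edge G n S U -> reach_le G n r U T ->
                 reach_le G n (Datatypes.S r) S T.

Definition connected (G : Group) (n : nat) (S T : list G) : Prop :=
  exists r, reach_le G n r S T.

Definition component_exp_growth (G : Group) (n : nat) (S : list G) : Prop :=
  exists v : list G, connected G n S v /\
  exists alpha : R, 1 < alpha /\
  exists r0 : nat, forall r : nat, (r0 <= r)%nat ->
    exists L : list (list G), NoDup L /\
      (forall w, In w L -> reach_le G n r v w) /\
      alpha ^ r <= INR (length L).

Definition exp_nielsen_growth (G : Group) : Prop :=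
  exists n (S : list G), gen_tuple G n S /\ component_exp_growth G n S.

(* Main.v *)
Require Import Defs.
From Stdlib Require Import Reals List Arith Lia Lra ClassicalEpsilon.
Import ListNotations.
Local Open Scope nat_scope.

Section GL.
Variable G : Group.
Lemma g_mulV (x : G) : gmul x (ginv x) = gone.
Proof.
  assert (H : gmul (ginv x) (gmul x (ginv x)) = ginv x).
  { rewrite gmul_assoc. rewrite gmul_Vl, gmul_1l. reflexivity. }
  assert (H2 : gmul (ginv (ginv x)) (gmul (ginv x) (gmul x (ginv x))) = gone) by (rewrite H; apply gmul_Vl).
  rewrite gmul_assoc, gmul_Vl, gmul_1l in H2. exact H2.
Qed.
Lemma g_mul1 (x : G) : gmul x gone = x.
Proof. rewrite <- (gmul_Vl G x), gmul_assoc, g_mulV, gmul_1l. reflexivity. Qed.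
Lemma g_cancl (a b c : G) : gmul a b = gmul a c -> b = c.
Proof. intro H. rewrite <- (gmul_1l G b), <- (gmul_1l G c), <- (gmul_Vl G a),
  <- !gmul_assoc, H. reflexivity. Qed.
Lemma g_cancr (a b c : G) : gmul a c = gmul b c -> a = b.
Proof. intro H. rewrite <- (g_mul1 a), <- (g_mul1 b), <- (g_mulV c), !gmul_assoc, H. reflexivity. Qed.
Lemma g_mulKV (a b : G) : gmul a (gmul (ginv a) b) = b.
Proof. rewrite gmul_assoc, g_mulV, gmul_1l. reflexivity. Qed.
End GL.

Section Hom.
Variables (G H : Group) (h : G -> H) (hh : is_hom G H h).
Lemma hom1 : h gone = gone.
Proof. apply (g_cancl H (h gone)). rewrite <- hh, gmul_1l, g_mul1. reflexivity. Qed.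
Lemma homV x : h (ginv x) = ginv (h x).
Proof. apply (g_cancr H _ _ (h x)). rewrite <- hh, !gmul_Vl. apply hom1. Qed.
End Hom.

Definition op {G : Group} (c : nat) (gi gj : G) : G :=
  match c with 0 => gmul gj gi | 1 => gmul gj (ginv gi) | 2 => gmul gi gj | _ => gmul (ginv gi) gj end.

Definition mv {G : Group} i j c (S : list G) := set_nth S j (op c (nth i S gone) (nth j S gone)).

Lemma move_iff {G : Group} n (S T : list G) :
  nielsen_move n S T <-> exists i j c, i < n /\ j < n /\ i <> j /\ T = mv i j c S.
Proof.
  split.
  - intros (i & j & Hi & Hj & Hij & H). simpl in H.
    destruct H as [H|[H|[H|H]]]; [exists i, j, 0|exists i, j, 1|exists i, j, 2|exists i, j, 3]; auto.
  - intros (i & j & c & Hi & Hj & Hij & ->). exists i, j. do 3 (split; auto). simpl.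
    unfold mv. destruct c as [|[|[|c]]]; simpl; auto.
Qed.

Lemma set_nth_length {A} (l : list A) j a : length (set_nth l j a) = length l.
Proof. revert j; induction l; intros [|j]; simpl; auto. Qed.

Lemma map_set_nth {A B} (f : A -> B) l j a : map f (set_nth l j a) = set_nth (map f l) j (f a).
Proof. revert j; induction l; intros [|j]; simpl; auto. f_equal; auto. Qed.

Lemma set_nth_app {A} (l T : list A) j a : j < length l -> set_nth (l ++ T) j a = set_nth l j a ++ T.
Proof. revert j; induction l; intros [|j] Hj; simpl in *; try lia; auto. rewrite IHl; auto; lia. Qed.

Lemma hom_op (G H : Group) (h : G -> H) (hh : is_hom G H h) c a b : h (op c a b) = op c (h a) (h b).
Proof. destruct c as [|[|[|c]]]; simpl; rewrite hh; try rewrite (homV G H h hh); auto. Qed.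

Lemma map_mv (G H : Group) (h : G -> H) (hh : is_hom G H h) i j c (S : list G) :
  i < length S -> j < length S -> map h (mv i j c S) = mv i j c (map h S).
Proof.
  intros Hi Hj. unfold mv. rewrite map_set_nth, hom_op by auto. f_equal. f_equal.
  - rewrite <- (hom1 G H h hh), map_nth. reflexivity.
  - rewrite <- (hom1 G H h hh), map_nth. reflexivity.
Qed.

Lemma mv_app (G : Group) i j c (S T : list G) : i < length S -> j < length S -> mv i j c (S ++ T) = mv i j c S ++ T.
Proof. intros. unfold mv. rewrite !app_nth1, set_nth_app; auto. Qed.

Lemma mv_length (G : Group) i j c (S : list G) : length (mv i j c S) = length S.
Proof. apply set_nth_length. Qed.

Lemma in_gen_incl (G : Group) (l l' : list G) x : incl l l' -> in_gen l x -> in_gen l' x.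
Proof. intros Hi H; induction H; [apply gen_base; auto|apply gen_one|apply gen_mul|apply gen_inv]; auto. Qed.

Lemma gen_app (G : Group) (S T : list G) : generates T -> generates (S ++ T).
Proof. intros HT g. apply (in_gen_incl _ T); auto. intros x Hx; apply in_or_app; auto. Qed.

Lemma reach_len (G : Group) n r (a b : list G) : reach_le G n r a b -> length a = n -> length b = n.
Proof. induction 1; auto. intros _. apply IHreach_le. destruct H as (_ & [? _] & _); auto. Qed.

Lemma gt_app (H : Group) (T X : list H) n : generates T -> length X = n -> gen_tuple H (n + length T) (X ++ T).
Proof. intros HT HX. split; [rewrite length_app; lia| apply gen_app; auto]. Qed.

Lemma fwd (G H : Group) (h : G -> H) (hh : is_hom G H h) (T : list H) (HT : generates T) n r (v w : list G) :
  reach_le G n r v w -> length v = n -> reach_le H (n + length T) r (map h v ++ T) (map h w ++ T).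
Proof.
  induction 1 as [r S|r S U W He Hr IH]; intros Hl. apply reach_refl.
  destruct He as (_ & [HU _] & Hm). apply move_iff in Hm as (i & j & c & Hi & Hj & Hij & ->).
  apply reach_step with (map h (mv i j c S) ++ T); [|apply IH; auto].
  split; [apply gt_app; auto; rewrite length_map; auto|].
  split; [apply gt_app; auto; rewrite length_map; auto|].
  apply move_iff. exists i, j, c. repeat split; try lia.
  rewrite map_mv, mv_app; auto; rewrite ?length_map; lia.
Qed.

Lemma bwd (G H : Group) (f : H -> G) (hf : is_hom H G f) (T : list H) (HT : generates T) n r (v w : list G) :
  reach_le G n r v w -> forall v', length v' = n -> map f v' = v ->
  exists w', length w' = n /\ map f w' = w /\ reach_le H (n + length T) r (v' ++ T) (w' ++ T).
Proof.
  induction 1 as [r S|r S U W He Hr IH]; intros v' Hl Hv.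
  - exists v'; repeat split; auto. apply reach_refl.
  - destruct He as (_ & [HU _] & Hm). apply move_iff in Hm as (i & j & c & Hi & Hj & Hij & ->).
    destruct (IH (mv i j c v')) as (w' & Hw1 & Hw2 & Hw3).
    + rewrite mv_length; auto.
    + rewrite map_mv; subst; auto; lia.
    + exists w'; repeat split; auto.
      apply reach_step with (mv i j c v' ++ T); auto.
      split; [apply gt_app; auto|]. split; [apply gt_app; auto; rewrite mv_length; auto|].
      apply move_iff. exists i, j, c. repeat split; try lia.
      rewrite mv_app; auto; lia.
Qed.

Lemma lift_list (G H : Group) (f : H -> G) (hs : forall y, exists x, f x = y) (l : list G) :
  exists l', map f l' = l.
Proof. induction l as [|a l IH]. exists []; auto. destruct IH as [l' E], (hs a) as [x Ex].
  exists (x :: l'); simpl; congruence. Qed.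

Fixpoint tuples {A} (K : list A) n : list (list A) :=
  match n with 0 => [[]] | S n => flat_map (fun a => map (cons a) (tuples K n)) K end.

Lemma len_fm {A} (K : list A) (X : list (list A)) :
  length (flat_map (fun a => map (cons a) X) K) = length K * length X.
Proof. induction K; simpl; auto. rewrite length_app, length_map, IHK. reflexivity. Qed.

Lemma tuples_len {A} (K : list A) n : length (tuples K n) = length K ^ n.
Proof. induction n; simpl; auto. rewrite len_fm, IHn. reflexivity. Qed.

Lemma in_tuples {A} (K : list A) ks : (forall x, In x ks -> In x K) -> In ks (tuples K (length ks)).
Proof.
  induction ks as [|a ks IH]; intros Hk; simpl; auto.
  apply in_flat_map. exists a. split; [apply Hk; simpl; auto|].
  apply in_map. apply IH. intros; apply Hk; simpl; auto.
Qed.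

Fixpoint zmul {G : Group} (w k : list G) : list G :=
  match w, k with a :: w, b :: k => gmul a b :: zmul w k | _, _ => [] end.
Fixpoint kdiff {G : Group} (w0 w : list G) : list G :=
  match w0, w with a :: w0, b :: w => gmul (ginv a) b :: kdiff w0 w | _, _ => [] end.

Lemma zk (G : Group) (w0 w : list G) : length w0 = length w -> zmul w0 (kdiff w0 w) = w.
Proof. revert w; induction w0; intros [|b w] Hl; simpl in *; try lia; auto.
  rewrite g_mulKV, IHw0; auto. Qed.
Lemma kd_len (G : Group) (w0 w : list G) : length w0 = length w -> length (kdiff w0 w) = length w.
Proof. revert w; induction w0; intros [|b w] Hl; simpl in *; try lia; auto. Qed.
Lemma kd_in (G H : Group) (f : G -> H) (hf : is_hom G H f) (w0 w : list G) :
  map f w0 = map f w -> forall x, In x (kdiff w0 w) -> f x = gone.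
Proof.
  revert w; induction w0; intros [|b w] Hm x Hx; simpl in *; try discriminate; try tauto.
  injection Hm as E1 E2. destruct Hx as [<-|Hx]; eauto.
  rewrite hf, (homV G H f hf), E1. apply gmul_Vl.
Qed.

Lemma cover (G H : Group) (f : G -> H) (hf : is_hom G H f) (K : list G)
  (HK : forall x, f x = gone -> In x K) (T : list H) n (L' : list (list H)) :
  (forall y, In y L' -> exists w0, length w0 = n /\ map f w0 ++ T = y) ->
  exists B, length B = length L' * length K ^ n /\
    forall w, length w = n -> In (map f w ++ T) L' -> In w B.
Proof.
  induction L' as [|y L' IH]; intros Hy.
  - exists []; split; auto.
  - destruct IH as (B & HB1 & HB2). intros; apply Hy; simpl; auto.
    destruct (Hy y) as (w0 & Hw0 & Ey); simpl; auto.
    exists (map (zmul w0) (tuples K n) ++ B). split.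
    + rewrite length_app, length_map, tuples_len, HB1. simpl. reflexivity.
    + intros w Hw [E|E]; apply in_or_app; [left|right; auto].
      rewrite <- Ey in E. apply app_inv_tail in E.
      rewrite <- (zk G w0 w) by lia. apply in_map.
      replace n with (length (kdiff w0 w)) by (rewrite kd_len; lia).
      apply in_tuples. intros x Hx. apply HK. eapply kd_in; eauto.
Qed.

Lemma real_part (alpha : R) (c : nat) : (1 < alpha)%R -> exists beta r1, (1 < beta)%R /\
  forall r m l, r1 <= r -> (alpha ^ r <= INR l)%R -> l <= m * c -> (beta ^ r <= INR m)%R.
Proof.
  intros Ha. exists (sqrt alpha).
  assert (Hb : (1 < sqrt alpha)%R) by (rewrite <- sqrt_1; apply sqrt_lt_1; lra).
  destruct (Pow_x_infinity (sqrt alpha)) with (b := INR c) as [N HN].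
  { rewrite Rabs_pos_eq; lra. }
  exists N. split; auto. intros r m l Hr H1 H2.
  specialize (HN r Hr). rewrite Rabs_pos_eq in HN by (apply pow_le; lra).
  apply le_INR in H2. rewrite mult_INR in H2.
  assert (E : (alpha ^ r = sqrt alpha ^ r * sqrt alpha ^ r)%R)
    by (rewrite <- Rpow_mult_distr, sqrt_sqrt; lra).
  assert (Hp : (0 < sqrt alpha ^ r)%R) by (apply pow_lt; lra).
  pose proof (pos_INR m). pose proof (pos_INR c).
  destruct (Rle_or_lt (sqrt alpha ^ r) (INR m)) as [?|Hlt]; auto.
  exfalso. nra.
Qed.

Lemma lift_ball {A B} (f : A -> B) (P : A -> Prop) (L : list B) :
  (forall w, In w L -> exists w', P w' /\ f w' = w) ->
  exists Lw, map f Lw = L /\ forall w', In w' Lw -> P w'.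
Proof.
  induction L as [|a L IH]; intros H.
  - exists []; split; auto. intros _ [].
  - destruct IH as (Lw & E & HP). intros; apply H; simpl; auto.
    destruct (H a) as (x & Hx & Ex); simpl; auto.
    exists (x :: Lw); split; [simpl; congruence|]. intros w' [<-|?]; auto.
Qed.

Lemma map_inj {A B} (f : A -> B) : (forall x y, f x = f y -> x = y) ->
  forall l l', map f l = map f l' -> l = l'.
Proof. intros Hf; induction l; intros [|b l'] E; simpl in *; try discriminate; auto.
  injection E as E1 E2. f_equal; auto. Qed.

Theorem proposition3p7 (G G' : Group) :
  finitely_generated G -> finitely_generated G' ->
  ( (* (i) G is (isomorphic to) a subgroup of G' *)
    (exists f : G -> G', is_hom G G' f /\ (forall x y, f x = f y -> x = y))
    \/ (* (ii) G is a quotient of G' *)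
    (exists f : G' -> G, is_hom G' G f /\ (forall y, exists x, f x = y))
    \/ (* (iii) G' is the quotient of G by a finite normal subgroup *)
    (exists f : G -> G', is_hom G G' f /\ (forall y, exists x, f x = y) /\
       exists K : list G, forall x, f x = gone -> In x K) ) ->
  exp_nielsen_growth G -> exp_nielsen_growth G'.
Proof.
  intros _ [T HT] Hc (n & S & [HSl HSg] & v & [r' Hv] & alpha & Ha & r0 & Hball).
  assert (Hvl : length v = n) by (eapply reach_len; eauto).
  destruct Hc as [(f & hf & finj)|[(f & hf & fs)|(f & hf & fs & K & HK)]].
  - exists (n + length T), (map f S ++ T). split; [apply gt_app; auto; rewrite length_map; auto|].
    exists (map f v ++ T). split; [exists r'; apply fwd; auto|].
    exists alpha. split; auto. exists r0. intros r Hr.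
    destruct (Hball r Hr) as (L & HL1 & HL2 & HL3).
    exists (map (fun w => map f w ++ T) L). split; [|split].
    + apply NoDup_map_NoDup_ForallPairs; auto. intros x y _ _ E.
      apply app_inv_tail in E. eapply map_inj; eauto.
    + intros w Hw. apply in_map_iff in Hw as (w0 & <- & Hw0). apply fwd; auto.
    + rewrite length_map; auto.
  - destruct (lift_list G G' f fs S) as [S' ES].
    assert (HS'l : length S' = n) by (rewrite <- HSl, <- ES, length_map; auto).
    destruct (bwd G G' f hf T HT n r' S v Hv S' HS'l ES) as (v' & Hv'1 & Hv'2 & Hv'3).
    exists (n + length T), (S' ++ T). split; [apply gt_app; auto|].
    exists (v' ++ T). split; [exists r'; auto|].
    exists alpha. split; auto. exists r0. intros r Hr.
    destruct (Hball r Hr) as (L & HL1 & HL2 & HL3).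
    destruct (lift_ball (map f) (fun w' => reach_le G' (n + length T) r (v' ++ T) (w' ++ T)) L)
      as (Lw & ELw & HLw).
    { intros w Hw. destruct (bwd G G' f hf T HT n r v w (HL2 w Hw) v' Hv'1 Hv'2) as (w' & _ & E & R).
      eauto. }
    exists (map (fun w => w ++ T) Lw). split; [|split].
    + apply NoDup_map_NoDup_ForallPairs.
      * intros x y _ _ E. apply app_inv_tail in E; auto.
      * apply (NoDup_map_inv (map f)). rewrite ELw; auto.
    + intros w Hw. apply in_map_iff in Hw as (w0 & <- & Hw0). auto.
    + rewrite length_map. rewrite <- ELw, length_map in HL3; auto.
  - exists (n + length T), (map f S ++ T). split; [apply gt_app; auto; rewrite length_map; auto|].
    exists (map f v ++ T). split; [exists r'; apply fwd; auto|].
    destruct (real_part alpha (length K ^ n) Ha) as (beta & r1 & Hb & Hbr).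
    exists beta. split; auto. exists (Nat.max r0 r1). intros r Hr.
    destruct (Hball r ltac:(lia)) as (L & HL1 & HL2 & HL3).
    pose (dec := fun x y : list G' => excluded_middle_informative (x = y)).
    pose (L' := nodup dec (map (fun w => map f w ++ T) L)).
    exists L'. split; [|split].
    + apply NoDup_nodup.
    + intros w Hw. unfold L' in Hw. apply nodup_In, in_map_iff in Hw as (w0 & <- & Hw0).
      apply fwd; auto.
    + destruct (cover G G' f hf K HK T n L') as (B & HB1 & HB2).
      { intros y Hy. unfold L' in Hy. apply nodup_In, in_map_iff in Hy as (w0 & <- & Hw0).
        exists w0; split; auto. eapply reach_len; eauto. }
      apply (Hbr r (length L') (length L)); [lia|auto|].
      rewrite <- HB1. apply NoDup_incl_length; auto.
      intros w Hw. apply HB2. eapply reach_len; eauto.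
      unfold L'. apply nodup_In. apply (in_map (fun w => map f w ++ T)); auto.
Qed.
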